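(* For every $\alpha\in[0,1]$ there exists a set $G_\alpha\subset[1,2]$ such that $\dim_{\mathrm M}G_\alpha=0$ and $\dim_{\mathrm A}G_\alpha=\alpha$.
   Context: $N(E,\delta)$ is the minimal number of intervals of length $\delta$ covering $E$. $\dim_{\mathrm M}E=\inf\{a>0:\exists c>0\ \forall\delta\in(0,1),\ N(E,\delta)\le c\delta^{-a}\}$. $\dim_{\mathrm A}E=\inf\{a>0:\exists c>0\text{ such that for all subintervals }I\subset[1,2]\text{ and all }\delta\in(0,|I|),\ N(E\cap I,\delta)\le c\delta^{-a}|I|^a\}$. *)

(* Defs.v *)
From Stdlib Require Import Reals List ClassicalEpsilon.
From Coquelicot Require Import Coquelicot.
Open Scope R_scope.

Definition covered_by (E : R -> Prop) (delta : R) (n : nat) : Prop :=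
  exists l : list R, length l = n /\
    forall x, E x -> exists a, In a l /\ a <= x <= a + delta.

(* N(E, delta): the minimal number of intervals of length delta covering E
   (chosen by Hilbert's epsilon; it is the genuine minimum whenever some
   finite cover exists, which is the case for bounded E and delta > 0). *)
Definition Ncov (E : R -> Prop) (delta : R) : nat :=
  epsilon (inhabits 0%nat)
    (fun n => covered_by E delta n /\ forall m, covered_by E delta m -> (n <= m)%nat).

Definition dimM (E : R -> Prop) : Rbar :=
  Glb_Rbar (fun a => 0 < a /\ exists c, 0 < c /\
    forall delta, 0 < delta < 1 -> INR (Ncov E delta) <= c * Rpower delta (- a)).

Definition dimA (E : R -> Prop) : Rbar :=
  Glb_Rbar (fun a => 0 < a /\ exists c, 0 < c /\
    forall u v, 1 <= u -> u <= v -> v <= 2 ->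
    forall delta, 0 < delta < v - u ->
      INR (Ncov (fun x => E x /\ u <= x <= v) delta)
        <= c * Rpower delta (- a) * Rpower (v - u) a).

(* Main.v *)
Require Import Defs.
From Stdlib Require Import Reals.
From Coquelicot Require Import Coquelicot.
From Stdlib Require Import List ClassicalEpsilon Classical Lia Lra ZArith.
Import ListNotations.
Open Scope R_scope.

Definition dec (P : Prop) : nat := if excluded_middle_informative P then 1%nat else 0%nat.

Fixpoint cnt (P : nat -> Prop) (m d : nat) : nat :=
  match d with O => O | S d' => (cnt P m d' + dec (P (m + S d')%nat))%nat end.

Fixpoint adm (P : nat -> Prop) (n t : nat) : Prop :=
  match n with
  | O => t = O
  | S n' => adm P n' (t / 2) /\ (t mod 2 = 0 \/ (t mod 2 = 1 /\ P (S n')))%nat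
  end.

Fixpoint relL (P : nat -> Prop) (m d : nat) : list nat :=
  match d with
  | O => [0%nat]
  | S d' => map (fun r => 2 * r)%nat (relL P m d') ++
      (if excluded_middle_informative (P (m + S d')%nat)
       then map (fun r => 2 * r + 1)%nat (relL P m d') else nil)
  end.

Lemma length_relL P m d : length (relL P m d) = (2 ^ cnt P m d)%nat.
Proof.
  induction d; simpl; auto.
  rewrite length_app, length_map. unfold dec.
  destruct (excluded_middle_informative _); simpl; rewrite ?length_map, IHd;
  rewrite ?Nat.pow_add_r; simpl; lia.
Qed.

Lemma relL_lt P m d r : In r (relL P m d) -> (r < 2 ^ d)%nat.
Proof.
  revert r; induction d; simpl; intros r H.
  - destruct H as [<-|[]]; lia.
  - apply in_app_or in H. destruct H as [H|H].
    + apply in_map_iff in H. destruct H as [r' [<- H]]. specialize (IHd _ H). lia.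
    + destruct (excluded_middle_informative _); [|destruct H].
      apply in_map_iff in H. destruct H as [r' [<- H]]. specialize (IHd _ H). lia.
Qed.

Lemma NoDup_relL P m d : NoDup (relL P m d).
Proof.
  induction d; simpl.
  - constructor; [simpl; tauto| constructor].
  - apply NoDup_app.
    + apply NoDup_map_NoDup_ForallPairs; auto. intros x y _ _; lia.
    + destruct (excluded_middle_informative _); [|constructor].
      apply NoDup_map_NoDup_ForallPairs; auto. intros x y _ _; lia.
    + intros x H1 H2. destruct (excluded_middle_informative _); [|destruct H2].
      apply in_map_iff in H1, H2. destruct H1 as [a [<- _]]. destruct H2 as [b [E _]]. lia.
Qed.

Lemma divmod2 x y b : (b < 2)%nat -> x = (2 * y + b)%nat -> (x / 2 = y /\ x mod 2 = b)%nat.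
Proof.
  intros Hb ->. split.
  - symmetry. apply (Nat.div_unique _ 2 _ b); lia.
  - symmetry. apply (Nat.mod_unique _ 2 y); lia.
Qed.

Lemma adm_S P n t : adm P (S n) t = (adm P n (t / 2) /\ (t mod 2 = 0 \/ (t mod 2 = 1 /\ P (S n)))%nat).
Proof. reflexivity. Qed.

Lemma adm_zero P m : adm P m 0.
Proof. induction m; [reflexivity|]. rewrite adm_S, Nat.Div0.div_0_l, Nat.Div0.mod_0_l. auto. Qed.

Lemma adm_decomp P m d t : adm P (m + d) t ->
  adm P m (t / 2 ^ d) /\ In (t mod 2 ^ d)%nat (relL P m d).
Proof.
  revert t; induction d; intros t H.
  - rewrite Nat.add_0_r in H. rewrite Nat.pow_0_r, Nat.div_1_r, Nat.mod_1_r. split; auto.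
    simpl; auto.
  - rewrite Nat.add_succ_r, adm_S in H. destruct H as [H Hb].
    destruct (IHd _ H) as [H1 H2]. split.
    + rewrite Nat.pow_succ_r', <- Nat.Div0.div_div. exact H1.
    + rewrite Nat.pow_succ_r', Nat.Div0.mod_mul_r. simpl relL.
      apply in_or_app. destruct Hb as [Hb|[Hb HP]].
      * left. rewrite Hb. apply in_map_iff. exists ((t/2) mod 2 ^ d)%nat. split; auto; lia.
      * right. destruct (excluded_middle_informative _) as [_|n]; [|rewrite Nat.add_succ_r in n; tauto].
        rewrite Hb. apply in_map_iff. exists ((t/2) mod 2 ^ d)%nat. split; auto; lia.
Qed.

Lemma adm_compose P m d q r : adm P m q -> In r (relL P m d) ->
  adm P (m + d) (q * 2 ^ d + r).
Proof.
  revert r; induction d; intros r Hq Hr.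
  - simpl in Hr. destruct Hr as [<-|[]]. rewrite Nat.add_0_r.
    replace (q * 2 ^ 0 + 0)%nat with q by (simpl; lia). auto.
  - rewrite Nat.add_succ_r. cbn [relL] in Hr. apply in_app_or in Hr. rewrite adm_S.
    destruct Hr as [Hr|Hr].
    + apply in_map_iff in Hr. destruct Hr as [r' [<- Hr']].
      destruct (divmod2 (q * 2 ^ S d + 2 * r') (q * 2 ^ d + r') 0) as [E1 E2]; [lia| rewrite Nat.pow_succ_r'; lia|].
      rewrite E1, E2. split; auto.
    + destruct (excluded_middle_informative _) as [HP|]; [|destruct Hr].
      apply in_map_iff in Hr. destruct Hr as [r' [<- Hr']].
      destruct (divmod2 (q * 2 ^ S d + (2 * r' + 1)) (q * 2 ^ d + r') 1) as [E1 E2]; [lia| rewrite Nat.pow_succ_r'; lia|].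
      rewrite E1, E2. split; auto. right. split; auto. rewrite <- Nat.add_succ_r; auto.
Qed.

Lemma adm_shift P n j t : adm P n t -> adm P (n + j) (t * 2 ^ j).
Proof.
  intros H. replace (t * 2 ^ j)%nat with (t * 2 ^ j + 0)%nat by lia.
  apply adm_compose; auto. clear. induction j; simpl; auto.
  apply in_or_app; left. apply in_map_iff. exists 0%nat; split; auto.
Qed.

Lemma adm_bound P n t : adm P n t -> (t < 2 ^ n)%nat.
Proof.
  intros H. replace n with (0 + n)%nat in H by lia.
  destruct (adm_decomp _ _ _ _ H) as [H1 _]. simpl in H1.
  apply Nat.div_small_iff in H1; auto. apply Nat.pow_nonzero; lia.
Qed.

Fixpoint cb (al : R) (n : nat) : nat :=
  match n with
  | O => O
  | S k => if Rle_dec (INR (cb al k) + 1) (al * INR (S k)) then S (cb al k) else cb al k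
  end.

Lemma cb_spec al n : 0 <= al <= 1 -> INR (cb al n) <= al * INR n < INR (cb al n) + 1.
Proof.
  intros Ha. induction n.
  - simpl. lra.
  - change (cb al (S n)) with (if Rle_dec (INR (cb al n) + 1) (al * INR (S n)) then S (cb al n) else cb al n).
    destruct (Rle_dec _ _) as [H|H]; rewrite S_INR in *; rewrite ?S_INR; rewrite ?Rmult_plus_distr_l in *; lra.
Qed.

Lemma cb_step al n : cb al (S n) = cb al n \/ cb al (S n) = S (cb al n).
Proof. simpl. destruct (Rle_dec _ _); auto. Qed.

Definition blk (i : nat) : Prop := exists k, (4 ^ k < i <= 4 ^ k + k)%nat.
Definition Dg al (i : nat) : Prop := blk i /\ cb al i = S (cb al (pred i)).

Lemma dec_le P : (dec P <= 1)%nat.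
Proof. unfold dec; destruct (excluded_middle_informative P); lia. Qed.

Lemma cnt_mono (P Q : nat -> Prop) m d : (forall i, P i -> Q i) -> (cnt P m d <= cnt Q m d)%nat.
Proof.
  intros H. induction d; simpl; auto. unfold dec.
  destruct (excluded_middle_informative (P _)); destruct (excluded_middle_informative (Q _)); try lia.
  exfalso; auto.
Qed.

Lemma cnt_add P m d1 d2 : cnt P m (d1 + d2) = (cnt P m d1 + cnt P (m + d1) d2)%nat.
Proof.
  induction d2; simpl.
  - rewrite Nat.add_0_r. lia.
  - rewrite Nat.add_succ_r. simpl. rewrite IHd2. replace (m + S (d1 + d2))%nat with (m + d1 + S d2)%nat by lia. lia.
Qed.

Lemma cnt_bound P m d j : (forall i, (m < i <= m + d)%nat -> P i -> (i <= m + j)%nat) ->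
  (cnt P m d <= j)%nat.
Proof.
  revert j; induction d; intros j H; simpl; [lia|].
  assert (Hc : (cnt P m d <= d)%nat).
  { clear. induction d; simpl; auto. pose proof (dec_le (P (m + S d)%nat)). lia. }
  unfold dec. destruct (excluded_middle_informative _) as [HP|HP].
  - specialize (H (m + S d)%nat ltac:(lia) HP). lia.
  - rewrite Nat.add_0_r. apply IHd. intros i Hi HPi. apply H; auto; lia.
Qed.

Lemma cnt_upper_aux al m d : 0 <= al <= 1 ->
  INR (cnt (Dg al) m d) <= INR (cb al (m + d)) - INR (cb al m).
Proof.
  intros Ha. induction d; simpl cnt.
  - rewrite Nat.add_0_r. simpl. lra.
  - rewrite plus_INR. unfold dec. rewrite Nat.add_succ_r.
    destruct (excluded_middle_informative _) as [[_ HD]|HD].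
    + simpl pred in HD. rewrite HD. rewrite ?S_INR, ?INR_0 in *. lra.
    + destruct (cb_step al (m + d)) as [E|E]; rewrite E; rewrite ?S_INR; rewrite ?S_INR, ?INR_0 in *; lra.
Qed.

Lemma cnt_upper al m d : 0 <= al <= 1 -> INR (cnt (Dg al) m d) <= al * INR d + 1.
Proof.
  intros Ha. pose proof (cnt_upper_aux al m d Ha).
  pose proof (cb_spec al (m + d) Ha). pose proof (cb_spec al m Ha).
  rewrite plus_INR in *. nra.
Qed.

Lemma cnt_lower_aux al m d : 0 <= al <= 1 -> (forall i, (m < i <= m + d)%nat -> blk i) ->
  INR (cb al (m + d)) - INR (cb al m) <= INR (cnt (Dg al) m d).
Proof.
  intros Ha. induction d; simpl cnt; intros Hb.
  - rewrite Nat.add_0_r. simpl. lra.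
  - rewrite plus_INR. unfold dec. rewrite Nat.add_succ_r.
    assert (IH := IHd ltac:(intros i Hi; apply Hb; lia)).
    destruct (excluded_middle_informative _) as [[_ HD]|HD].
    + simpl pred in HD. rewrite HD. rewrite ?S_INR, ?INR_0 in *. lra.
    + destruct (cb_step al (m + d)) as [E|E]; rewrite E; rewrite ?S_INR; rewrite ?S_INR, ?INR_0 in *; try lra.
      exfalso. apply HD. split; [apply Hb; lia|]. simpl pred. auto.
Qed.

Lemma cnt_lower al m d : 0 <= al <= 1 -> (forall i, (m < i <= m + d)%nat -> blk i) ->
  al * INR d - 1 <= INR (cnt (Dg al) m d).
Proof.
  intros Ha Hb. pose proof (cnt_lower_aux al m d Ha Hb).
  pose proof (cb_spec al (m + d) Ha). pose proof (cb_spec al m Ha).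
  rewrite plus_INR in *. nra.
Qed.

Lemma pow4_ge k : (1 <= k)%nat -> (4 <= 4 ^ k)%nat.
Proof. intros H. replace 4%nat with (4 ^ 1)%nat at 1 by reflexivity. apply Nat.pow_le_mono_r; lia. Qed.

Lemma blk_count k N : (N <= 4 ^ (S k))%nat -> (cnt blk 0 N <= k * k)%nat.
Proof.
  revert N; induction k; intros N HN.
  - apply cnt_bound. intros i Hi [k0 Hk0]. exfalso.
    destruct k0; [simpl in Hk0; lia|]. pose proof (pow4_ge (S k0) ltac:(lia)). simpl in HN. lia.
  - destruct (Nat.le_gt_cases N (4 ^ S k)) as [H|H].
    + specialize (IHk N H). nia.
    + replace N with (4 ^ S k + (N - 4 ^ S k))%nat by lia. rewrite cnt_add.
      specialize (IHk (4 ^ S k)%nat (le_n _)).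
      assert (cnt blk (0 + 4 ^ S k) (N - 4 ^ S k) <= S k)%nat.
      { apply cnt_bound. intros i Hi [k0 Hk0].
        destruct (Nat.lt_total k0 (S k)) as [Hl|[He|Hg]].
        - exfalso. assert (4 ^ k0 <= 4 ^ k)%nat by (apply Nat.pow_le_mono_r; lia).
          pose proof (Nat.pow_gt_lin_r 4 k ltac:(lia)).
          rewrite Nat.pow_succ_r' in Hi. lia.
        - subst. lia.
        - exfalso. assert (4 ^ S (S k) <= 4 ^ k0)%nat by (apply Nat.pow_le_mono_r; lia). lia. }
      nia.
Qed.

Lemma cube_le k : (k * k * k <= 4 ^ k)%nat.
Proof.
  induction k as [|k IH]; [simpl; lia|].
  destruct k as [|[|k]]; [simpl; lia| simpl; lia|].
  rewrite Nat.pow_succ_r'. nia.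
Qed.

Lemma blk_density K : exists C, forall N, (K * cnt blk 0 N <= N + C)%nat.
Proof.
  exists (K * K * K)%nat.
  assert (forall k N, (N <= 4 ^ S k)%nat -> (K * cnt blk 0 N <= N + K * K * K)%nat).
  { induction k; intros N HN.
    - pose proof (blk_count 0 N HN). nia.
    - destruct (Nat.le_gt_cases N (4 ^ S k)) as [H|H]; auto.
      pose proof (blk_count (S k) N HN). pose proof (cube_le (S k)).
      assert (E1 : (K * cnt blk 0 N <= K * (S k * S k))%nat) by (apply Nat.mul_le_mono_l; auto).
      destruct (Nat.le_gt_cases K (S k)) as [HK|HK].
      + assert (K * (S k * S k) <= S k * S k * S k)%nat by nia. lia.
      + assert (K * (S k * S k) <= K * K * K)%nat by nia. lia. }
  intros N. apply (H N). pose proof (Nat.pow_gt_lin_r 4 (S N) ltac:(lia)). lia.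
Qed.

Definition Gs P x : Prop := exists n t, adm P n t /\ x = 1 + INR t / 2 ^ n.

Lemma pow2_INR n : INR (2 ^ n) = 2 ^ n.
Proof. rewrite pow_INR. f_equal. Qed.

Lemma pow2_pos n : 0 < 2 ^ n.
Proof. apply pow_lt; lra. Qed.

Lemma G_in P x : Gs P x -> 1 <= x <= 2.
Proof.
  intros [n [t [H ->]]]. apply adm_bound in H. apply lt_INR in H. rewrite pow2_INR in H.
  pose proof (pow2_pos n). pose proof (pos_INR t).
  assert (0 <= INR t / 2 ^ n) by (apply Rdiv_le_0_compat; lra).
  assert (INR t / 2 ^ n <= 1).
  { apply Rmult_le_reg_r with (2 ^ n); auto. unfold Rdiv. rewrite Rmult_assoc, Rinv_l; lra. }
  lra.
Qed.

Lemma frac_lt A B r : 0 < A -> 0 < B -> r < B -> r / (A * B) < / A.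
Proof.
  intros HA HB Hr. replace (/ A) with (B / (A * B)) by (field; lra).
  unfold Rdiv. apply Rmult_lt_compat_r; auto. apply Rinv_0_lt_compat. nra.
Qed.

Lemma level P x N : Gs P x -> exists t, adm P N t /\
  1 + INR t / 2 ^ N <= x < 1 + INR t / 2 ^ N + / 2 ^ N.
Proof.
  intros [n [t0 [H ->]]]. pose proof (pow2_pos N). pose proof (pow2_pos n).
  destruct (Nat.le_gt_cases n N) as [Hl|Hl].
  - destruct (Nat.le_exists_sub n N Hl) as [j [-> _]]. rewrite Nat.add_comm.
    exists (t0 * 2 ^ j)%nat. split; [apply adm_shift; auto|].
    rewrite mult_INR, pow2_INR, pow_add.
    replace (INR t0 * 2 ^ j / (2 ^ n * 2 ^ j)) with (INR t0 / 2 ^ n) by (field; split; apply pow_nonzero; lra).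
    pose proof (pow2_pos n). pose proof (pow2_pos j). assert (0 < / (2 ^ n * 2 ^ j)) by (apply Rinv_0_lt_compat; nra). lra.
  - destruct (Nat.le_exists_sub N n ltac:(lia)) as [j [-> _]]. rewrite Nat.add_comm in H |- *.
    destruct (adm_decomp _ _ _ _ H) as [Hq _].
    exists (t0 / 2 ^ j)%nat. split; auto.
    pose proof (Nat.div_mod_eq t0 (2 ^ j)) as E.
    assert (Hr : (t0 mod 2 ^ j < 2 ^ j)%nat) by (apply Nat.mod_upper_bound; apply Nat.pow_nonzero; lia).
    set (q := (t0 / 2 ^ j)%nat) in *. set (r := (t0 mod 2 ^ j)%nat) in *.
    rewrite E, plus_INR, mult_INR, pow2_INR, pow_add.
    pose proof (pow2_pos j). apply lt_INR in Hr. rewrite pow2_INR in Hr. pose proof (pos_INR r).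
    replace ((2 ^ j * INR q + INR r) / (2 ^ N * 2 ^ j)) with (INR q / 2 ^ N + INR r / (2 ^ N * 2 ^ j))
      by (field; split; apply pow_nonzero; lra).
    pose proof (frac_lt (2 ^ N) (2 ^ j) (INR r) H0 H2 Hr).
    assert (0 <= INR r / (2 ^ N * 2 ^ j)) by (apply Rdiv_le_0_compat; nra).
    lra.
Qed.

Lemma Rdiv_lt_reg a b c : 0 < c -> a / c < b / c -> a < b.
Proof. intros Hc H. apply Rmult_lt_reg_r with (/ c); auto. apply Rinv_0_lt_compat; auto. Qed.

Lemma qfacts P m d x : Gs P x -> exists q r, adm P m q /\ In r (relL P m d) /\
  1 + INR (q * 2 ^ d + r) / 2 ^ (m + d) <= x < 1 + INR (q * 2 ^ d + r) / 2 ^ (m + d) + / 2 ^ (m + d) /\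
  INR q / 2 ^ m <= x - 1 < (INR q + 1) / 2 ^ m.
Proof.
  intros Hx. destruct (level P x (m + d) Hx) as [t [Ht Hb]].
  destruct (adm_decomp _ _ _ _ Ht) as [H1 H2].
  pose proof (Nat.div_mod_eq t (2 ^ d)) as E.
  pose proof (relL_lt _ _ _ _ H2) as Hr.
  exists (t / 2 ^ d)%nat, (t mod 2 ^ d)%nat. 
  set (q := (t / 2 ^ d)%nat) in *. set (r := (t mod 2 ^ d)%nat) in *.
  assert (Et : t = (q * 2 ^ d + r)%nat) by lia. rewrite <- Et.
  split; auto. split; auto. split; auto.
  rewrite Et, plus_INR, mult_INR, pow2_INR, pow_add in Hb.
  assert (Hrn := Hr). apply lt_INR in Hr. rewrite pow2_INR in Hr. pose proof (pos_INR r). pose proof (pos_INR q).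
  pose proof (pow2_pos m). pose proof (pow2_pos d).
  replace ((INR q * 2 ^ d + INR r) / (2 ^ m * 2 ^ d)) with (INR q / 2 ^ m + INR r / (2 ^ m * 2 ^ d)) in Hb
      by (field; split; apply pow_nonzero; lra).
  assert (0 <= INR r / (2 ^ m * 2 ^ d)) by (apply Rdiv_le_0_compat; nra).
  assert (INR r / (2 ^ m * 2 ^ d) + / (2 ^ m * 2 ^ d) <= / 2 ^ m).
  { replace (INR r / (2 ^ m * 2 ^ d) + / (2 ^ m * 2 ^ d)) with ((INR r + 1) / (2 ^ m * 2 ^ d)) by (field; split; apply pow_nonzero; lra).
    replace (/ 2 ^ m) with (2 ^ d / (2 ^ m * 2 ^ d)) by (field; split; apply pow_nonzero; lra).
    unfold Rdiv. apply Rmult_le_compat_r. left; apply Rinv_0_lt_compat; nra.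
    assert (INR r + 1 = INR (S r)) by (rewrite S_INR; lra).
    assert (INR (S r) <= INR (2 ^ d)) as H8 by (apply le_INR; lia).
    rewrite pow2_INR in H8. lra. }
  replace ((INR q + 1) / 2 ^ m) with (INR q / 2 ^ m + / 2 ^ m) by (field; apply pow_nonzero; lra).
  lra.
Qed.

Lemma cover_G P u v m d delta (E : R -> Prop) : v - u <= / 2 ^ m -> / 2 ^ (m + d) <= delta ->
  (forall x, E x -> Gs P x /\ u <= x <= v) -> covered_by E delta (3 * 2 ^ cnt P m d).
Proof.
  intros Huv Hd HE.
  pose proof (pow2_pos m) as Pm.
  assert (Hq0 : exists q0, forall x, E x -> forall q r, adm P m q -> In r (relL P m d) ->
     INR q / 2 ^ m <= x - 1 < (INR q + 1) / 2 ^ m -> (q = q0 - 1 \/ q = q0 \/ q = q0 + 1)%nat).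
  { destruct (classic (exists x0, E x0)) as [[x0 Hx0]|Hn].
    - destruct (HE x0 Hx0) as [G0 B0].
      destruct (qfacts P m d x0 G0) as [q0 [r0 [_ [_ [_ Hq0]]]]].
      exists q0. intros x Hx q r _ _ Hq. destruct (HE x Hx) as [_ Bx].
      assert (INR q / 2 ^ m < (INR q0 + 2) / 2 ^ m).
      { replace ((INR q0 + 2) / 2 ^ m) with ((INR q0 + 1) / 2 ^ m + / 2 ^ m) by (field; lra). lra. }
      assert (INR q0 / 2 ^ m < (INR q + 2) / 2 ^ m).
      { replace ((INR q + 2) / 2 ^ m) with ((INR q + 1) / 2 ^ m + / 2 ^ m) by (field; lra). lra. }
      apply Rdiv_lt_reg in H; auto. apply Rdiv_lt_reg in H0; auto.
      assert (INR q < INR (q0 + 2)) by (rewrite plus_INR; simpl; lra).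
      assert (INR q0 < INR (q + 2)) by (rewrite plus_INR; simpl; lra).
      apply INR_lt in H1. apply INR_lt in H2. lia.
    - exists 0%nat. intros x Hx. exfalso; eauto. }
  destruct Hq0 as [q0 Hq0].
  exists (flat_map (fun q => map (fun r => 1 + INR (q * 2 ^ d + r) / 2 ^ (m + d)) (relL P m d)) [q0 - 1; q0; q0 + 1]%nat).
  split.
  - simpl. rewrite !length_app, !length_map, length_relL. simpl. lia.
  - intros x Hx. destruct (HE x Hx) as [Gx Bx].
    destruct (qfacts P m d x Gx) as [q [r [Hq [Hr [Hb Hqb]]]]].
    exists (1 + INR (q * 2 ^ d + r) / 2 ^ (m + d)). split; [|lra].
    apply in_flat_map. exists q. split.
    + destruct (Hq0 x Hx q r Hq Hr Hqb) as [ Eq | [ Eq | Eq ] ]; rewrite Eq; simpl; tauto.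
    + apply in_map_iff. exists r. split; auto.
Qed.

Lemma Ncov_spec E delta n : covered_by E delta n ->
  covered_by E delta (Ncov E delta) /\ forall m, covered_by E delta m -> (Ncov E delta <= m)%nat.
Proof.
  intros Hn. unfold Ncov. apply epsilon_spec.
  revert Hn. induction n as [n IH] using (well_founded_induction Wf_nat.lt_wf). intros Hn.
  destruct (classic (exists m, (m < n)%nat /\ covered_by E delta m)) as [[m [Hm Hc]]|Hno].
  - exact (IH m Hm Hc).
  - exists n. split; auto. intros m Hm. destruct (Nat.le_gt_cases n m); auto.
    exfalso; apply Hno; eauto.
Qed.

Lemma Ncov_upper E delta n : covered_by E delta n -> (Ncov E delta <= n)%nat.
Proof. intros H. apply (Ncov_spec E delta n H); auto. Qed.

Lemma Ncov_lower E delta n pts : covered_by E delta n -> NoDup pts ->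
  (forall x, In x pts -> E x) ->
  (forall x y, In x pts -> In y pts -> x <> y -> delta < Rabs (x - y)) ->
  (length pts <= Ncov E delta)%nat.
Proof.
  intros Hc Hnd Hin Hsep. destruct (Ncov_spec E delta n Hc) as [[l [Hl Hcov]] _].
  rewrite <- Hl.
  set (f := fun x => epsilon (inhabits 0) (fun a => In a l /\ a <= x <= a + delta)).
  assert (Hf : forall x, In x pts -> In (f x) l /\ f x <= x <= f x + delta).
  { intros x Hx. unfold f. apply epsilon_spec. apply Hcov. auto. }
  rewrite <- (length_map f pts). apply NoDup_incl_length.
  - apply NoDup_map_NoDup_ForallPairs; auto. intros x y Hx Hy Heq.
    destruct (Req_dec x y) as [|Hne]; auto. exfalso.
    specialize (Hsep x y Hx Hy Hne). destruct (Hf x Hx) as [_ A1]. destruct (Hf y Hy) as [_ A2].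
    rewrite Heq in A1. unfold Rabs in Hsep. destruct (Rcase_abs _); lra.
  - intros a Ha. apply in_map_iff in Ha. destruct Ha as [x [<- Hx]]. apply Hf; auto.
Qed.

Lemma glb_char (S : R -> Prop) al : (forall a, S a -> al <= a) -> (forall a, al < a -> S a) ->
  Glb_Rbar S = Finite al.
Proof.
  intros H1 H2. apply is_glb_Rbar_unique. split.
  - intros x Hx. simpl. apply H1; auto.
  - intros b Hb. destruct b as [r| |]; simpl; auto.
    + destruct (Rle_dec r al) as [|Hn]; auto. exfalso.
      assert (S ((r + al) / 2)) by (apply H2; lra). specialize (Hb _ H). simpl in Hb. lra.
    + specialize (Hb (al + 1) (H2 (al + 1) ltac:(lra))). simpl in Hb. auto.
Qed.

Lemma exp_le x y : x <= y -> exp x <= exp y.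
Proof. intros [H| E]; [left; apply exp_increasing; auto| right; rewrite E; auto]. Qed.

Lemma ln2_pos : 0 < ln 2.
Proof. pose proof ln_lt_2. lra. Qed.

Lemma pow2_exp n : 2 ^ n = exp (INR n * ln 2).
Proof. rewrite <- ln_pow by lra. rewrite exp_ln; auto. apply pow2_pos. Qed.

Lemma ln_inv_pow2 n : ln (/ 2 ^ n) = - (INR n * ln 2).
Proof. rewrite ln_Rinv by apply pow2_pos. rewrite ln_pow by lra. auto. Qed.

Lemma nat_arch x : exists n, x < INR n.
Proof.
  destruct (archimed x) as [H _]. destruct (Z_lt_le_dec (up x) 0) as [Hz|Hz].
  - exists 0%nat. apply IZR_lt in Hz. simpl. lra.
  - exists (Z.to_nat (up x)). rewrite INR_IZR_INZ, Z2Nat.id; auto.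
Qed.

Lemma INR_lt_pow2 n : INR n < 2 ^ n.
Proof. rewrite <- pow2_INR. apply lt_INR. apply Nat.pow_gt_lin_r; lia. Qed.

Lemma inv_small x : 0 < x -> exists N, / 2 ^ N < x.
Proof.
  intros Hx. destruct (nat_arch (/ x)) as [N HN]. exists N.
  pose proof (INR_lt_pow2 N). pose proof (Rinv_0_lt_compat _ Hx).
  rewrite <- (Rinv_inv x). apply Rinv_lt_contravar; [apply Rmult_lt_0_compat; auto; apply pow2_pos|]. lra.
Qed.

Lemma lvl_delta d : 0 < d <= 1 -> exists N, / 2 ^ N <= d < 2 / 2 ^ N.
Proof.
  intros Hd. destruct (inv_small d) as [N0 H0]; [lra|].
  assert (H0' : / 2 ^ N0 <= d) by lra. clear H0. revert H0'.
  induction N0; intros H.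
  - exists 0%nat. simpl in *. lra.
  - destruct (Rle_dec (/ 2 ^ N0) d) as [H1|H1]; auto.
    exists (S N0). split; auto.
    replace (2 / 2 ^ S N0) with (/ 2 ^ N0) by (simpl; field; apply pow_nonzero; lra). lra.
Qed.

Lemma lvl_win x : 0 < x <= 1 -> exists m, / 2 ^ S m < x <= / 2 ^ m.
Proof.
  intros Hx. destruct (inv_small x) as [N0 H0]; [lra|]. revert H0.
  induction N0; intros H.
  - simpl in H. lra.
  - destruct (Rlt_dec (/ 2 ^ N0) x) as [H1|H1]; auto.
    exists N0. lra.
Qed.

Lemma Rpower_exp a b : Rpower a b = exp (b * ln a).
Proof. reflexivity. Qed.

Lemma cnt_Dg_density al a : 0 < a -> exists C, forall N, INR (cnt (Dg al) 0 N) <= a * INR N + C.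
Proof.
  intros Ha. destruct (nat_arch (/ a)) as [K HK].
  destruct (blk_density K) as [C HC]. exists (a * INR C). intros N.
  pose proof (cnt_mono (Dg al) blk 0 N ltac:(intros i [Hi _]; auto)).
  specialize (HC N). apply le_INR in H, HC. rewrite mult_INR, plus_INR in HC.
  pose proof (pos_INR (cnt blk 0 N)). pose proof (pos_INR N). pose proof (pos_INR C).
  assert (HK1 : 1 <= a * INR K).
  { apply Rmult_lt_compat_l with (r := a) in HK; auto. rewrite Rinv_r in HK by lra. lra. }
  assert (0 <= (a * INR K - 1) * INR (cnt blk 0 N)) by (apply Rmult_le_pos; lra).
  assert (a * (INR K * INR (cnt blk 0 N)) <= a * (INR N + INR C)) by (apply Rmult_le_compat_l; lra).
  nra.
Qed.

Lemma Ncov_exp E delta k : covered_by E delta (3 * 2 ^ k) ->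
  INR (Ncov E delta) <= 3 * exp (INR k * ln 2).
Proof.
  intros H. apply Ncov_upper, le_INR in H. rewrite mult_INR, pow2_INR, pow2_exp in H.
  simpl in H. lra.
Qed.

Lemma mink al a : 0 <= al <= 1 -> 0 < a -> exists c, 0 < c /\
  forall delta, 0 < delta < 1 -> INR (Ncov (Gs (Dg al)) delta) <= c * Rpower delta (- a).
Proof.
  intros Hal Ha. destruct (cnt_Dg_density al a Ha) as [C HC].
  exists (3 * exp ((C + a) * ln 2)). split; [pose proof (exp_pos ((C + a) * ln 2)); lra|].
  intros delta Hd. destruct (lvl_delta delta ltac:(lra)) as [N [HN1 HN2]].
  assert (Hc : covered_by (Gs (Dg al)) delta (3 * 2 ^ cnt (Dg al) 0 N)).
  { apply (cover_G (Dg al) 1 2 0%nat N); [simpl; lra| simpl; auto|].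
    intros x Hx. split; auto. apply (G_in (Dg al)); auto. }
  apply Ncov_exp in Hc. eapply Rle_trans; [exact Hc|].
  rewrite Rpower_exp. rewrite Rmult_assoc, <- exp_plus.
  apply Rmult_le_compat_l; [lra|]. apply exp_le.
  specialize (HC N).
  assert (ln delta < ln 2 - INR N * ln 2).
  { replace (ln 2 - INR N * ln 2) with (ln (2 / 2 ^ N)).
    - apply ln_increasing; lra.
    - unfold Rdiv. rewrite ln_mult, ln_inv_pow2; [lra|lra|]. apply Rinv_0_lt_compat, pow2_pos. }
  pose proof ln2_pos.
  assert (INR (cnt (Dg al) 0 N) * ln 2 <= (a * INR N + C) * ln 2) by (apply Rmult_le_compat_r; lra).
  nra.
Qed.

Lemma pow2_le_inv m N : (m <= N)%nat -> / 2 ^ N <= / 2 ^ m.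
Proof.
  intros H. apply Rinv_le_contravar; [apply pow2_pos|]. apply Rle_pow; [lra|auto].
Qed.

Lemma assU al a : 0 <= al <= 1 -> al <= a -> 0 < a -> exists c, 0 < c /\
  forall u v, 1 <= u -> u <= v -> v <= 2 ->
    forall delta, 0 < delta < v - u ->
      INR (Ncov (fun x => Gs (Dg al) x /\ u <= x <= v) delta)
        <= c * Rpower delta (- a) * Rpower (v - u) a.
Proof.
  intros Hal Haa Ha. exists (3 * exp (3 * ln 2)). split; [pose proof (exp_pos (3 * ln 2)); lra|].
  intros u v Hu Huv Hv delta Hd.
  destruct (lvl_win (v - u) ltac:(lra)) as [m [Hm1 Hm2]].
  destruct (lvl_delta delta ltac:(lra)) as [N [HN1 HN2]].
  assert (HmN : (m < N)%nat).
  { destruct (Nat.le_gt_cases N m) as [H|H]; auto. exfalso.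
    pose proof (pow2_le_inv _ _ H). lra. }
  destruct (Nat.le_exists_sub (S m) N HmN) as [d0 [Ed _]].
  set (d := S d0). assert (EN : N = (m + d)%nat) by (unfold d; lia).
  assert (Hc : covered_by (fun x => Gs (Dg al) x /\ u <= x <= v) delta (3 * 2 ^ cnt (Dg al) m d)).
  { apply (cover_G (Dg al) u v m d); auto. rewrite <- EN; auto. }
  apply Ncov_exp in Hc. eapply Rle_trans; [exact Hc|].
  rewrite !Rpower_exp. rewrite !Rmult_assoc, <- !exp_plus.
  apply Rmult_le_compat_l; [lra|]. apply exp_le.
  pose proof ln2_pos.
  pose proof (cnt_upper al m d Hal) as Hcu.
  assert (Hl1 : ln delta < ln 2 - INR N * ln 2).
  { replace (ln 2 - INR N * ln 2) with (ln (2 / 2 ^ N)).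
    - apply ln_increasing; lra.
    - unfold Rdiv. rewrite ln_mult, ln_inv_pow2; [lra|lra|]. apply Rinv_0_lt_compat, pow2_pos. }
  assert (Hl2 : - (INR (S m) * ln 2) < ln (v - u)).
  { rewrite <- ln_inv_pow2. apply ln_increasing; auto. apply Rinv_0_lt_compat, pow2_pos. }
  assert (Hl3 : ln delta < ln (v - u)) by (apply ln_increasing; lra).
  rewrite EN, plus_INR in Hl1. rewrite S_INR in Hl2.
  set (L := ln (v - u) - ln delta).
  assert (HL : (INR d - 2) * ln 2 < L) by (unfold L; lra).
  assert (al * L <= a * L) by (apply Rmult_le_compat_r; unfold L; lra).
  assert (al * ((INR d - 2) * ln 2) <= al * L) by (apply Rmult_le_compat_l; lra).
  assert (INR (cnt (Dg al) m d) * ln 2 <= (al * INR d + 1) * ln 2) by (apply Rmult_le_compat_r; lra).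
  assert (al * ln 2 <= ln 2) by nra.
  replace (- a * ln delta + a * ln (v - u)) with (a * L) by (unfold L; ring).
  nra.
Qed.

Lemma sep_nat N (r1 r2 : nat) : r1 <> r2 ->
  / 2 ^ S N < Rabs ((1 + INR r1 / 2 ^ N) - (1 + INR r2 / 2 ^ N)).
Proof.
  intros Hne. pose proof (pow2_pos N).
  replace ((1 + INR r1 / 2 ^ N) - (1 + INR r2 / 2 ^ N)) with ((INR r1 - INR r2) / 2 ^ N) by (field; lra).
  assert (Hs : / 2 ^ S N < / 2 ^ N).
  { apply Rinv_lt_contravar; [apply Rmult_lt_0_compat; apply pow2_pos|]. simpl. lra. }
  destruct (Nat.lt_total r1 r2) as [Hlt|[Hlt|Hlt]]; [|tauto|].
  - assert (INR (S r1) <= INR r2) as H1 by (apply le_INR; lia). rewrite S_INR in H1.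
    assert ((INR r1 - INR r2) / 2 ^ N <= - / 2 ^ N).
    { replace (- / 2 ^ N) with ((-1) / 2 ^ N) by (field; lra). unfold Rdiv.
      apply Rmult_le_compat_r; [left; apply Rinv_0_lt_compat; auto| lra]. }
    unfold Rabs; destruct (Rcase_abs _); lra.
  - assert (INR (S r2) <= INR r1) as H1 by (apply le_INR; lia). rewrite S_INR in H1.
    assert (/ 2 ^ N <= (INR r1 - INR r2) / 2 ^ N).
    { replace (/ 2 ^ N) with (1 / 2 ^ N) by (field; lra). unfold Rdiv.
      apply Rmult_le_compat_r; [left; apply Rinv_0_lt_compat; auto| lra]. }
    unfold Rabs; destruct (Rcase_abs _); lra.
Qed.

Lemma assL al a c : 0 <= al <= 1 -> 0 < a < al -> 0 < c ->
  ~ (forall u v, 1 <= u -> u <= v -> v <= 2 ->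
    forall delta, 0 < delta < v - u ->
      INR (Ncov (fun x => Gs (Dg al) x /\ u <= x <= v) delta)
        <= c * Rpower delta (- a) * Rpower (v - u) a).
Proof.
  intros Hal Ha Hc Hb. pose proof ln2_pos.
  destruct (nat_arch ((ln c + (a + 1) * ln 2) / ((al - a) * ln 2))) as [k Hk].
  set (m := (4 ^ k)%nat). set (N := (m + k)%nat).
  pose proof (pow2_pos m) as Pm. pose proof (pow2_pos (S N)) as PN.
  assert (HmN : / 2 ^ S N < / 2 ^ m).
  { apply Rinv_lt_contravar; [nra|]. apply Rlt_pow; [lra|]. unfold N; lia. }
  assert (Hm1 : / 2 ^ m <= 1).
  { rewrite <- Rinv_1. apply Rinv_le_contravar; [lra|]. apply pow_R1_Rle; lra. }
  assert (Hpos : 0 < / 2 ^ S N) by (apply Rinv_0_lt_compat; auto).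
  specialize (Hb 1 (1 + / 2 ^ m) ltac:(lra) ltac:(lra) ltac:(lra) (/ 2 ^ S N) ltac:(lra)).
  set (E := fun x => Gs (Dg al) x /\ 1 <= x <= 1 + / 2 ^ m) in Hb.
  assert (Hc1 : covered_by E (/ 2 ^ S N) (3 * 2 ^ cnt (Dg al) m (S k))).
  { apply (cover_G (Dg al) 1 (1 + / 2 ^ m) m (S k)); [lra| |].
    - replace (m + S k)%nat with (S N) by (unfold N; lia). lra.
    - intros x Hx; exact Hx. }
  set (pts := map (fun r => 1 + INR r / 2 ^ N) (relL (Dg al) m k)).
  assert (Hlen : (length pts <= Ncov E (/ 2 ^ S N))%nat).
  { apply (Ncov_lower _ _ _ pts Hc1).
    - apply NoDup_map_NoDup_ForallPairs; [|apply NoDup_relL].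
      intros x y _ _ Hxy. apply INR_eq.
      assert (INR x / 2 ^ N = INR y / 2 ^ N) by lra. 
      pose proof (pow2_pos N).
      apply Rmult_eq_reg_r with (/ 2 ^ N); auto. apply Rinv_neq_0_compat; lra.
    - intros x Hx. unfold pts in Hx. apply in_map_iff in Hx. destruct Hx as [r [<- Hr]].
      split.
      + exists N, r. split; auto. unfold N.
        pose proof (adm_compose (Dg al) m k 0 r (adm_zero _ _) Hr). simpl in H0. exact H0.
      + pose proof (relL_lt _ _ _ _ Hr) as Hr'. apply lt_INR in Hr'. rewrite pow2_INR in Hr'.
        pose proof (pos_INR r). pose proof (pow2_pos N). pose proof (pow2_pos k).
        assert (0 <= INR r / 2 ^ N) by (apply Rdiv_le_0_compat; lra).
        assert (INR r / 2 ^ N <= / 2 ^ m).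
        { unfold N. rewrite pow_add.
          replace (/ 2 ^ m) with (2 ^ k / (2 ^ m * 2 ^ k)) by (field; split; apply pow_nonzero; lra).
          unfold Rdiv. apply Rmult_le_compat_r; [left; apply Rinv_0_lt_compat; nra| lra]. }
        lra.
    - intros x y Hx Hy Hxy. unfold pts in Hx, Hy. apply in_map_iff in Hx, Hy.
      destruct Hx as [r1 [<- _]]. destruct Hy as [r2 [<- _]].
      apply sep_nat. intros ->. apply Hxy; auto. }
  unfold pts in Hlen. rewrite length_map, length_relL in Hlen.
  apply le_INR in Hlen. rewrite pow2_INR, pow2_exp in Hlen.
  assert (Hlow : al * INR k - 1 <= INR (cnt (Dg al) m k)).
  { apply cnt_lower; auto. intros i Hi. exists k. unfold m in Hi. lia. }
  rewrite !Rpower_exp, Rmult_assoc, <- exp_plus in Hb.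
  replace (1 + / 2 ^ m - 1) with (/ 2 ^ m) in Hb by ring.
  rewrite !ln_inv_pow2 in Hb. unfold N in Hb. rewrite S_INR, plus_INR in Hb.
  rewrite <- (exp_ln c), <- exp_plus in Hb by auto.
  assert (Hx := Rle_trans _ _ _ Hlen Hb).
  assert (Hx' : INR (cnt (Dg al) m k) * ln 2 <= ln c + (- a * - ((INR m + INR k + 1) * ln 2) + a * - (INR m * ln 2))).
  { destruct (Rle_dec (INR (cnt (Dg al) m k) * ln 2) (ln c + (- a * - ((INR m + INR k + 1) * ln 2) + a * - (INR m * ln 2)))) as [|Hn]; auto.
    exfalso. apply Rnot_le_lt in Hn. apply exp_increasing in Hn. lra. }
  assert (Hk' : ln c + (a + 1) * ln 2 < INR k * ((al - a) * ln 2)).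
  { apply Rmult_lt_compat_r with (r := (al - a) * ln 2) in Hk; [|nra].
    unfold Rdiv in Hk. rewrite Rmult_assoc, Rinv_l in Hk; [lra|]. nra. }
  assert ((al * INR k - 1) * ln 2 <= INR (cnt (Dg al) m k) * ln 2) by (apply Rmult_le_compat_r; lra).
  nra.
Qed.

Theorem lemma6p2 : forall alpha : R, 0 <= alpha <= 1 ->
  exists G : R -> Prop, (forall x, G x -> 1 <= x <= 2) /\
    dimM G = Finite 0 /\ dimA G = Finite alpha.
Proof.
  intros al Hal. exists (Gs (Dg al)). split; [intros x Hx; apply (G_in (Dg al)); auto|]. split.
  - unfold dimM. apply glb_char.
    + intros a [Ha _]. lra.
    + intros a Ha. split; auto. apply mink; auto.
  - unfold dimA. apply glb_char.
    + intros a [Ha [c [Hc Hb]]]. destruct (Rle_dec al a) as [|Hn]; auto.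
      exfalso. apply (assL al a c Hal ltac:(lra) Hc Hb).
    + intros a Ha. split; [lra|]. apply assU; lra.
Qed.
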